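(* Let $F$ be a finite rooted poset with root $\bot$ and height greater than $1$, such that $F$ validates $\mathbf{PL}_n$. Let $s,t$ be top (maximal) elements of $F$. Then there is a path $a_0a_1\cdots a_m$ with $a_0=s$, $a_m=t$, all $a_i\in{\uparrow^\circ\bot}$, such that for each $i$: ${\uparrow^\circ a_i}=\varnothing$ when $i$ is even, and ${\uparrow^\circ a_i}=\{a_{i-1},a_{i+1}\}$ when $i$ is odd.
   Context: For $x$ in a poset, ${\uparrow^\circ x}=\{y:y>x\}$. A path is a sequence $a_0\cdots a_m$ in which for each $i$ either $a_i<a_{i+1}$ or $a_i>a_{i+1}$. The height of a poset is the supremum of $|C|-1$ over chains $C$. A p-morphism $f$ satisfies $f(\uparrow x)=\uparrow f(x)$; an up-reduction of $F$ onto $G$ is a surjective p-morphism from an upset of $F$ onto $G$. For a finite rooted poset $Q$, $\chi(Q)$ is its Jankov–Fine formula: a frame validates $\chi(Q)$ iff it has no up-reduction onto $Q$. $\mathbf{BD}_n$ is the logic of all finite frames of height at most $n$. The 3-fork is $\{r,a,b,c\}$ with $r<a,r<b,r<c$ only; the Scott frame is $\{r,u_1,u_2,v\}$ with $r<u_1<u_2$, $r<v$ (and $r<u_2$) only. $\mathbf{PL}_n$ is the smallest intermediate logic containing $\mathbf{BD}_n$, $\chi(\text{3-fork})$ and $\chi(\text{Scott frame})$. *)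

(* Defs.v *)
From mathcomp Require Import all_boot.
Set Implicit Arguments. Unset Strict Implicit. Unset Printing Implicit Defensive.

Definition is_poset (T : finType) (le : rel T) : Prop :=
  reflexive le /\ antisymmetric le /\ transitive le.

Definition slt (T : finType) (le : rel T) (x y : T) : bool := le x y && (x != y).

Definition is_chain (T : finType) (le : rel T) (C : {set T}) : bool :=
  [forall x in C, forall y in C, le x y || le y x].

Definition height (T : finType) (le : rel T) : nat :=
  \max_(C : {set T} | is_chain le C) (#|C|).-1.

Definition is_upset (T : finType) (le : rel T) (U : {set T}) : Prop :=
  forall x y, x \in U -> le x y -> y \in U.

(* f restricted to the upset U is a surjective p-morphism onto (T', le'):
   f(up x) = up (f x) for x in U (up x lies inside U since U is an upset). *)
Definition up_reduction (T T' : finType) (le : rel T) (le' : rel T')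
    (U : {set T}) (f : T -> T') : Prop :=
  [/\ is_upset le U,
      (forall z : T', exists2 x, x \in U & f x = z),
      (forall x y, x \in U -> le x y -> le' (f x) (f y)) &
      (forall x z, x \in U -> le' (f x) z -> exists2 y, le x y & f y = z)].

Definition has_up_reduction (T T' : finType) (le : rel T) (le' : rel T') : Prop :=
  exists (U : {set T}) (f : T -> T'), up_reduction le le' U f.

(* The 3-fork: r = 0, a = 1, b = 2, c = 3. *)
Definition fork_le : rel 'I_4 := fun i j => (i == j) || (val i == 0).
(* The Scott frame: r = 0, u1 = 1, u2 = 2, v = 3; r < everything, u1 < u2. *)
Definition scott_le : rel 'I_4 :=
  fun i j => [|| i == j, val i == 0 | (val i == 1) && (val j == 2)].

Inductive form : Type :=
| Var of nat
| Bot
| And of form & form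
| Or of form & form
| Imp of form & form.

Fixpoint forces (T : finType) (le : rel T) (V : nat -> T -> bool) (x : T)
    (phi : form) : bool :=
  match phi with
  | Var p => V p x
  | Bot => false
  | And a b => forces le V x a && forces le V x b
  | Or a b => forces le V x a || forces le V x b
  | Imp a b => [forall y, le x y ==> (forces le V y a ==> forces le V y b)]
  end.

Definition monotone_val (T : finType) (le : rel T) (V : nat -> T -> bool) : Prop :=
  forall p x y, le x y -> V p x -> V p y.

Definition frame_valid (T : finType) (le : rel T) (phi : form) : Prop :=
  forall V, monotone_val le V -> forall x, forces le V x phi.

Definition in_BD (n : nat) (phi : form) : Prop :=
  forall (T : finType) (le : rel T), is_poset le -> height le <= n ->
    frame_valid le phi.

(* Since the set of formulas valid on a frame is an
   intermediate logic, F validates PL_n iff F validates BD_n, chi(3-fork) and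
   chi(Scott); by the defining property of Jankov--Fine formulas, F validates
   chi(Q) iff F has no up-reduction onto Q. *)
Definition validates_PL (n : nat) (T : finType) (le : rel T) : Prop :=
  [/\ (forall phi, in_BD n phi -> frame_valid le phi),
      ~ has_up_reduction le fork_le &
      ~ has_up_reduction le scott_le].

(* Main.v *)
Require Import Defs.
From mathcomp Require Import all_boot zify.
Set Implicit Arguments. Unset Strict Implicit. Unset Printing Implicit Defensive.

Definition isMax (T : finType) (le : rel T) (z : T) := [forall y, ~~ slt le z y].
Definition upc (T : finType) (le : rel T) (x : T) := [set z | le x z].

Lemma upc_lt (T : finType) (le : rel T) (Hp : is_poset le) x y :
  slt le x y -> #|upc le y| < #|upc le x|.
Proof.
case: Hp => Hr [Ha Ht] /andP [Hxy Hne].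
apply: proper_card; apply/properP; split.
  apply/subsetP => z; rewrite !inE => Hyz; exact: Ht Hxy Hyz.
exists x; rewrite !inE ?Hr //.
apply/negP => Hyx; move/negP: Hne; apply; apply/eqP; apply: Ha; by rewrite Hxy Hyx.
Qed.

Lemma ex_max (T : finType) (le : rel T) (Hp : is_poset le) y :
  exists2 m, le y m & isMax le m.
Proof.
have [Hr [Ha Ht]] := Hp.
suff: forall n y, #|upc le y| <= n -> exists2 m, le y m & isMax le m.
  by apply; apply: leqnn.
elim => [|n IH] {}y Hy.
  rewrite leqn0 in Hy; move/eqP/cards0_eq: Hy => H.
  have : y \in upc le y by rewrite inE Hr.
  by rewrite H inE.
case: (boolP (isMax le y)) => H; first by exists y.
move/forallPn: H => [z]; rewrite negbK => Hz.
have [m Hzm Hm] := IH z (leq_trans (upc_lt Hp Hz) Hy).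
exists m => //; case/andP: Hz => Hz _; exact: Ht Hz Hzm.
Qed.

Lemma scott_red (T : finType) (le : rel T) (Hp : is_poset le) x (A B : {set T}) :
 (forall y z, y \in A -> le y z -> z \in A) ->
 (forall y z, y \in B -> le y z -> z \in B) ->
 (forall y, y \in A -> y \in B -> False) ->
 (forall y, slt le x y = (y \in A) || (y \in B)) ->
 (exists b, b \in B) ->
 (exists2 y, y \in A & ~~ isMax le y) ->
 has_up_reduction le scott_le.
Proof.
have [Hr [Ha Ht]] := Hp.
move=> HA HB Hd Hc [b Hb] [y Hy Hny].
pose f z : 'I_4 := if z \in B then @Ordinal 4 3 isT else if z \in A then
   (if isMax le z then @Ordinal 4 2 isT else @Ordinal 4 1 isT) else @Ordinal 4 0 isT.
have HxA : x \notin A by apply/negP => H; move: (Hc x); rewrite H /slt eqxx andbF.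
have HxB : x \notin B by apply/negP => H; move: (Hc x); rewrite H orbT /slt eqxx andbF.
have leA z : z \in A -> le x z by move=> H; move: (Hc z); rewrite H => /andP[].
have leB z : z \in B -> le x z by move=> H; move: (Hc z); rewrite H orbT => /andP[].
have nB z : z \in A -> z \notin B by move=> H; apply/negP; exact: Hd.
have maxeq z w : isMax le z -> le z w -> w = z.
  move=> /forallP /(_ w) H Hzw; apply/eqP; rewrite eq_sym; apply: contraNT H => H.
  by rewrite /slt Hzw H.
have Hsurj : forall k, exists2 w, le x w & f w = k.
  move=> [[|[|[|[|k]]]] Hk]; last by [].
  - by exists x => //; apply: val_inj; rewrite /f (negbTE HxA) (negbTE HxB).
  - by exists y; [exact: leA | apply: val_inj; rewrite /f (negbTE (nB _ Hy)) Hy (negbTE Hny)].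
  - have [m Hym Hm] := ex_max Hp y.
    have HmA : m \in A := HA _ _ Hy Hym.
    by exists m; [exact: leA | apply: val_inj; rewrite /f (negbTE (nB _ HmA)) HmA Hm].
  - by exists b; [exact: leB | apply: val_inj; rewrite /f Hb].
exists (upc le x), f; split.
- by move=> u v; rewrite !inE => H1 H2; exact: Ht H1 H2.
- by move=> k; have [w Hw Hf] := Hsurj k; exists w; rewrite ?inE.
- move=> u v _ Huv; rewrite /scott_le /f.
  case: (boolP (u \in B)) => HuB; first by rewrite (HB _ _ HuB Huv) eqxx.
  case: (boolP (u \in A)) => HuA; last by rewrite orbT.
  have HvA := HA _ _ HuA Huv; rewrite (negbTE (nB _ HvA)) HvA.
  case: (boolP (isMax le u)) => Hu; first by rewrite (maxeq _ _ Hu Huv) Hu eqxx.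
  by case: (isMax le v); rewrite ?eqxx ?orbT.
- move=> u k; rewrite inE => Hxu; rewrite /scott_le.
  case/or3P => [/eqP <-|H0|/andP [H1 H2]]; first by exists u.
  + have Hux : u = x.
      case: (eqVneq u x) => // Hne; exfalso; move: (Hc u); rewrite /slt Hxu eq_sym Hne /=.
      move: H0; rewrite /f; case: (u \in B) => //; case: (u \in A) => //.
      by case: (isMax le u).
    by rewrite Hux; exact: Hsurj.
  + move: H1; rewrite /f; case: ifP => // HuB; case: ifP => // HuA.
    case: ifP => // Hu _.
    have [m Hum Hm] := ex_max Hp u.
    have HmA : m \in A := HA _ _ HuA Hum.
    exists m => //; apply: val_inj; rewrite /f (negbTE (nB _ HmA)) HmA Hm.
    by rewrite (eqP H2).
Qed.

Lemma fork_red (T : finType) (le : rel T) (Hp : is_poset le) x p1 p2 p3 :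
  slt le x p1 -> slt le x p2 -> slt le x p3 ->
  p1 != p2 -> p1 != p3 -> p2 != p3 ->
  (forall y, slt le x y -> isMax le y) ->
  has_up_reduction le fork_le.
Proof.
have [Hr [Ha Ht]] := Hp.
move=> H1 H2 H3 N12 N13 N23 Hm.
have ne z : slt le x z -> (z == x) = false.
  by case/andP => _ H; apply/negbTE; rewrite eq_sym.
pose f z : 'I_4 := if z == p1 then @Ordinal 4 1 isT else if z == p2 then @Ordinal 4 2 isT
   else if z == x then @Ordinal 4 0 isT else @Ordinal 4 3 isT.
have maxeq z w : isMax le z -> le z w -> w = z.
  move=> /forallP /(_ w) H Hzw; apply/eqP; rewrite eq_sym; apply: contraNT H => H.
  by rewrite /slt Hzw H.
have fx : f x = @Ordinal 4 0 isT.
  by apply: val_inj; rewrite /f eq_sym (ne _ H1) eq_sym (ne _ H2) eqxx.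
have Hsurj : forall k, exists2 w, le x w & f w = k.
  move=> [[|[|[|[|k]]]] Hk]; last by [].
  - by exists x => //; rewrite fx; apply: val_inj.
  - by exists p1; [case/andP: H1 | apply: val_inj; rewrite /f eqxx].
  - by exists p2; [case/andP: H2 | apply: val_inj; rewrite /f eq_sym (negbTE N12) eqxx].
  - exists p3; first by case/andP: H3.
    by apply: val_inj; rewrite /f eq_sym (negbTE N13) eq_sym (negbTE N23) (ne _ H3).
exists (upc le x), f; split.
- by move=> u v; rewrite !inE => H H'; exact: Ht H H'.
- by move=> k; have [w Hw Hf] := Hsurj k; exists w; rewrite ?inE.
- move=> u v; rewrite inE => Hxu Huv; rewrite /fork_le.
  case: (eqVneq u x) => [->|Hne]; first by rewrite fx orbT.
  have Hu : isMax le u by apply: Hm; rewrite /slt Hxu eq_sym Hne.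
  by rewrite (maxeq _ _ Hu Huv) eqxx.
- move=> u k; rewrite inE => Hxu; rewrite /fork_le.
  case/orP => [/eqP <-|H0]; first by exists u.
  have Hux : u = x.
    move: H0; rewrite /f; case: ifP => // _; case: ifP => // _.
    by case: ifP => // /eqP.
  by rewrite Hux; exact: Hsurj.
Qed.

Lemma height_wit (T : finType) (le : rel T) (bot : T) (Hp : is_poset le)
  (Hroot : forall x, le bot x) (Hh : 1 < height le) :
  exists y z, slt le bot y && slt le y z.
Proof.
case: (boolP [exists y, exists z, slt le bot y && slt le y z]).
  by case/existsP => y /existsP [z H]; exists y, z.
move=> Hn; exfalso; move: Hh; apply/negP; rewrite -leqNgt.
apply/bigmax_leqP => C HC.
rewrite leqNgt; apply/negP => H3.
have H2 : 1 < #|C :\ bot|.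
  move: H3; rewrite (cardsD1 bot C); case: (bot \in C) => /=; lia.
case/card_gt1P: H2 => u [v [Hu Hv Huv]].
move: Hu Hv; rewrite !inE => /andP [Hub Hu] /andP [Hvb Hv].
move/forallP: HC => /(_ u) /implyP /(_ Hu) /forallP /(_ v) /implyP /(_ Hv) Hc.
move/existsPn: Hn => Hn.
case/orP: Hc => Hc.
- move: (Hn u) => /existsPn /(_ v); rewrite /slt Hroot Hc eq_sym Hub Huv.
  by [].
- move: (Hn v) => /existsPn /(_ u); rewrite /slt Hroot Hc eq_sym Hvb eq_sym Huv.
  by [].
Qed.

Definition Good (T : finType) (le : rel T) (bot s u : T) :=
  exists m (a : nat -> T), ~~ odd m /\
    [/\ a 0 = s /\ a m = u,
        (forall i, i < m -> slt le (a i) (a i.+1) || slt le (a i.+1) (a i)),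
        (forall i, i <= m -> slt le bot (a i)),
        (forall i, i <= m -> ~~ odd i -> forall y, ~~ slt le (a i) y) &
        (forall i, i <= m -> odd i ->
           i < m /\ (forall y, slt le (a i) y <-> (y = a i.-1 \/ y = a i.+1)))].

Lemma good_ext (T : finType) (le : rel T) (bot s u v c : T) (Hp : is_poset le)
  (Hroot : forall x, le bot x) (Hw : exists y z, slt le bot y && slt le y z) :
  Good le bot s u -> isMax le u -> isMax le v ->
  (forall y, slt le c y = (y == u) || (y == v)) -> Good le bot s v.
Proof.
have [Hr [Ha Ht]] := Hp.
case: Hw => y0 [z0 /andP [Hy0 Hz0]].
move=> [m [a [Hev [[H0 Hm] Hstep Hbot Heven Hodd]]]] Hu Hv Hc.
have maxnot w : isMax le w -> slt le w z0 -> False.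
  by move/forallP/(_ z0) => H H'; rewrite H' in H.
have Hcb : slt le bot c.
  rewrite /slt Hroot /=; apply/negP => /eqP Hcb; subst c.
  move: (Hc y0); rewrite Hy0 => /esym /orP [] /eqP Hy; subst y0.
  - exact: maxnot Hu Hz0.
  - exact: maxnot Hv Hz0.
have Hvb : slt le bot v.
  rewrite /slt Hroot /=; apply/negP => /eqP Hvb; subst v.
  by move/forallP: Hv => /(_ y0); rewrite Hy0.
exists m.+2, (fun i => if i <= m then a i else if i == m.+1 then c else v).
split; first by rewrite /= negbK.
split.
- split; first by rewrite H0.
  have -> : (m.+1 < m) = false by lia.
  by have -> : (m.+2 == m.+1) = false by lia.
- move=> i Hi; case: (ltnP i m) => Him.
    have Him' : i <= m by lia.
    by rewrite Him'; apply: Hstep.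
  have : (i == m) || (i == m.+1) by lia.
  case/orP => /eqP ->; rewrite ?leqnn ?ltnn ?eqxx ?(ltnNge m.+1 m) ?ltnSn /=.
  + by rewrite Hm (Hc u) eqxx orbT.
  + have -> : (m.+2 == m.+1) = false by lia.
    by rewrite (Hc v) eqxx orbT.
- move=> i Hi; case: (leqP i m) => Him; first by apply: Hbot.
  by case: ifP.
- move=> i Hi Hie; case: (leqP i m) => Him; first by apply: Heven.
  case: ifP => [/eqP Hi1|_]; last by move=> y; apply/negP => H; move/forallP: Hv => /(_ y); rewrite H.
  by subst i; rewrite /= Hev in Hie.
- move=> i Hi Hio; case: (leqP i m) => Him.
    have [Hlt Heq] := Hodd i Him Hio.
    split; first by lia.
    rewrite ?Him ?Hlt (_ : i.-1 <= m); last by lia.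
    exact: Heq.
  have Hi1 : i = m.+1.
    have : (i == m.+1) || (i == m.+2) by lia.
    by case/orP => /eqP // Hi2; subst i; rewrite /= Hev in Hio.
  subst i; split => // y.
  have -> : (m.+1 < m) = false by lia.
  have -> : (m.+2 == m.+1) = false by lia.
  rewrite eqxx /= leqnn Hm.
  rewrite Hc; split; first by case/orP => /eqP; auto.
  by case => ->; rewrite eqxx ?orbT.
Qed.

Theorem lemma7p4 (n : nat) (T : finType) (le : rel T) (bot : T)
  (Hposet : is_poset le)
  (Hroot : forall x, le bot x)
  (Hheight : 1 < height le)
  (HPL : validates_PL n le)
  (s t : T)
  (Hs : forall y, ~~ slt le s y)
  (Ht : forall y, ~~ slt le t y) :
  exists (m : nat) (a : nat -> T),
    [/\ a 0 = s /\ a m = t,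
        (forall i, i < m -> slt le (a i) (a i.+1) || slt le (a i.+1) (a i)),
        (forall i, i <= m -> slt le bot (a i)),
        (forall i, i <= m -> ~~ odd i -> forall y, ~~ slt le (a i) y) &
        (forall i, i <= m -> odd i ->
           i < m /\ (forall y, slt le (a i) y <-> (y = a i.-1 \/ y = a i.+1)))].
Proof.
have [Hr [Ha Htr]] := Hposet.
case: HPL => _ Hnofork Hnoscott.
have Hw := height_wit Hposet Hroot Hheight.
have HsM : isMax le s by apply/forallP.
have HtM : isMax le t by apply/forallP.
have maxeq z w : isMax le z -> le z w -> w = z.
  move=> /forallP /(_ w) H Hzw; apply/eqP; rewrite eq_sym; apply: contraNT H => H.
  by rewrite /slt Hzw H.
pose e := fun u v => isMax le u && isMax le v &&
   [exists c, [forall y, slt le c y == ((y == u) || (y == v))]].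
have Hgood0 : Good le bot s s.
  exists 0, (fun _ => s); split => //; split => //.
  - move=> i _; rewrite /slt Hroot /=; apply/negP => /eqP Hb.
    case: Hw => y [z /andP [Hy _]]; move: (Hs y); by rewrite -Hb Hy.
  - by move=> i; rewrite leqn0 => /eqP ->.
have Hpath : forall p u, Good le bot s u -> path e u p -> Good le bot s (last u p).
  elim => [|v p IH] u Hu //= /andP [/andP [/andP [HuM HvM] /existsP [c Hc]] Hp].
  apply: IH Hp; apply: (good_ext Hposet Hroot Hw Hu HuM HvM) => y.
  exact: (eqP (forallP Hc y)).
case: (boolP (connect e s t)) => Hst.
  case/connectP: Hst => p Hp ->.
  have [m [a [_ H]]] := Hpath p s Hgood0 Hp.
  by exists m, a.
exfalso.
pose P := [set m | connect e s m].
pose mixed z := [exists m, [&& le z m, isMax le m & m \in P]] &&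
                [exists m, [&& le z m, isMax le m & m \notin P]].
have Hex : exists k, [exists z, mixed z && (#|upc le z| == k)].
  exists #|upc le bot|; apply/existsP; exists bot; rewrite eqxx andbT.
  apply/andP; split; apply/existsP; [exists s | exists t]; rewrite Hroot /=.
  - by rewrite HsM inE connect0.
  - by rewrite HtM inE.
case: (ex_minnP Hex) => k /existsP [x /andP [Hmx /eqP Hk]] Hmin.
have Hpure y : slt le x y -> ~~ mixed y.
  move=> Hxy; apply/negP => Hmy.
  have H1 : k <= #|upc le y|.
    by apply: Hmin; apply/existsP; exists y; rewrite Hmy eqxx.
  have := upc_lt Hposet Hxy; rewrite Hk; lia.
case/andP: Hmx => /existsP [p /and3P [Hxp HpM HpP]] /existsP [q /and3P [Hxq HqM HqP]].
have Hpq : p != q by apply: contraNneq HqP => <-.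
have Hsp : slt le x p.
  rewrite /slt Hxp /=; apply/negP => /eqP Hx; subst x.
  by move: Hpq; rewrite (maxeq _ _ HpM Hxq) eqxx.
have Hsq : slt le x q.
  rewrite /slt Hxq /=; apply/negP => /eqP Hx; subst x.
  by move: Hpq; rewrite (maxeq _ _ HqM Hxp) eqxx.
have HallM : forall y, slt le x y -> isMax le y.
  move=> y Hxy; apply/negPn/negP => HyN.
  pose A := [set z | slt le x z && [forall m, (le z m && isMax le m) ==> (m \in P)]].
  pose B := [set z | slt le x z && [forall m, (le z m && isMax le m) ==> (m \notin P)]].
  have Hup z w : slt le x z -> le z w -> slt le x w.
    case/andP => Hxz Hne Hzw; rewrite /slt (Htr _ _ _ Hxz Hzw) /=.
    apply: contraNneq Hne => Hxw; subst w; apply/eqP; apply: Ha; by rewrite Hxz Hzw.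
  have HA z w : z \in A -> le z w -> w \in A.
    rewrite !inE => /andP [Hxz /forallP Hf] Hzw; rewrite (Hup _ _ Hxz Hzw) /=.
    apply/forallP => m; apply/implyP => /andP [Hwm HmM]; apply: (implyP (Hf m)).
    by rewrite (Htr _ _ _ Hzw Hwm).
  have HB z w : z \in B -> le z w -> w \in B.
    rewrite !inE => /andP [Hxz /forallP Hf] Hzw; rewrite (Hup _ _ Hxz Hzw) /=.
    apply/forallP => m; apply/implyP => /andP [Hwm HmM]; apply: (implyP (Hf m)).
    by rewrite (Htr _ _ _ Hzw Hwm).
  have Hd z : z \in A -> z \in B -> False.
    rewrite !inE => /andP [_ /forallP H1] /andP [_ /forallP H2].
    have [m Hzm HmM] := ex_max Hposet z.
    move: (implyP (H1 m)) (implyP (H2 m)); rewrite Hzm HmM => H1' H2'.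
    by move: (H2' isT); rewrite H1'.
  have Hc z : slt le x z = (z \in A) || (z \in B).
    rewrite !inE; case: (boolP (slt le x z)) => //= Hxz.
    have := Hpure _ Hxz; rewrite negb_and => /orP [] /existsPn H.
    + apply/esym/orP; right; apply/forallP => m; apply/implyP => /andP [H1 H2].
      by move: (H m); rewrite H1 H2 /= => ->.
    + apply/esym/orP; left; apply/forallP => m; apply/implyP => /andP [H1 H2].
      by move: (H m); rewrite H1 H2 /= negbK.
  have HpA : p \in A.
    rewrite inE Hsp /=; apply/forallP => m; apply/implyP => /andP [H1 _].
    by rewrite (maxeq _ _ HpM H1).
  have HqB : q \in B.
    rewrite inE Hsq /=; apply/forallP => m; apply/implyP => /andP [H1 _].
    by rewrite (maxeq _ _ HqM H1).
  have : (y \in A) || (y \in B) by rewrite -Hc.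
  case/orP => Hy.
  - apply: Hnoscott; apply: (scott_red Hposet HA HB Hd Hc); first by exists q.
    by exists y.
  - apply: Hnoscott; apply: (@scott_red _ _ Hposet x B A HB HA).
    + by move=> z H1 H2; exact: Hd H2 H1.
    + by move=> z; rewrite orbC.
    + by exists p.
    + by exists y.
case: (boolP [exists r, [&& slt le x r, r != p & r != q]]).
  case/existsP => r /and3P [Hxr Hrp Hrq].
  apply: Hnofork; apply: (fork_red Hposet Hsp Hsq Hxr Hpq) => //; by rewrite eq_sym.
move/existsPn => Hno.
have He : e p q.
  rewrite /e HpM HqM /=; apply/existsP; exists x; apply/forallP => y.
  apply/eqP; case: (boolP (slt le x y)) => Hxy.
    move: (Hno y); rewrite Hxy /= negb_and !negbK => /orP [] /eqP ->; by rewrite eqxx ?orbT.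
  by apply/esym/negbTE; apply: contra Hxy => /orP [] /eqP ->.
move: HqP; rewrite !inE in HpP *; move/negP; apply.
by apply: connect_trans HpP (connect1 He).
Qed.
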